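(* Let $K\ge2$, $P>0$ and $H_1\ge H_2\ge\cdots\ge H_K>0$. For $\boldsymbol\alpha=(\alpha_1,\dots,\alpha_K)$ with $0\le\alpha_k\le1$ and $\sum_{k=1}^K\alpha_k=1$ let $$r_k(\boldsymbol\alpha)=\log_2\Big(1+\frac{\alpha_k}{\sum_{i=1}^{k-1}\alpha_i+\frac{1}{PH_k}}\Big).$$ Then there exists a maximizer $\boldsymbol\alpha^\star$ of $\min_{k}r_k(\boldsymbol\alpha)$ over this set such that $r_1(\boldsymbol\alpha^\star)=r_2(\boldsymbol\alpha^\star)=\cdots=r_K(\boldsymbol\alpha^\star)=r_{\max}$, where $r_{\max}$ is the maximum value.
   Context: $K$-user downlink NOMA with superposition coding and successive interference cancellation: $\alpha_k$ is the fraction of total power $P$ given to Receiver $k$'s message, $H_k$ is its channel gain, and $r_k(\boldsymbol\alpha)$ is its achieved rate. *)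

(* Defs.v *)
From mathcomp Require Import all_boot all_order all_algebra.
From mathcomp Require Import all_classical all_reals all_analysis.
Set Implicit Arguments. Unset Strict Implicit. Unset Printing Implicit Defensive.
Import Order.TTheory GRing.Theory Num.Theory.
Local Open Scope ring_scope.

Definition log2 {R : realType} (x : R) : R := ln x / ln 2.

(* rate of receiver k (0-indexed: receiver k+1 in the paper);
   interference from the messages of receivers with index < k *)
Definition rate {R : realType} (K : nat) (P : R) (H : 'I_K -> R)
  (a : 'I_K -> R) (k : 'I_K) : R :=
  log2 (1 + a k / (\sum_(i < K | (i < k)%N) a i + 1 / (P * H k))).

Definition feasible {R : realType} (K : nat) (a : 'I_K -> R) : Prop :=
  (forall k, 0 <= a k <= 1) /\ \sum_(k < K) a k = 1.

Definition is_min_rate {R : realType} (K : nat) (P : R) (H : 'I_K -> R)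
  (a : 'I_K -> R) (m : R) : Prop :=
  (exists k, rate P H a k = m) /\ (forall k, m <= rate P H a k).

(* Main.v *)
Require Import Defs.
From mathcomp Require Import all_boot all_order all_algebra.
From mathcomp Require Import all_classical all_reals all_analysis.
From mathcomp Require Import ring lra.
Import Order.TTheory GRing.Theory Num.Theory.
Local Open Scope ring_scope.
Import numFieldNormedType.Exports.

Fixpoint S {R : realType} (c : nat -> R) (t : R) n : R :=
  match n with 0 => 0 | n.+1 => (1+t) * S c t n + t * c n end.

Section L.
Variables (R : realType) (c : nat -> R).
Hypothesis cpos : forall n, 0 < c n.

Lemma S_ge0 t n : 0 <= t -> 0 <= S c t n.
Proof.
move=> t0; elim: n => [|n IH] //=.
have := cpos n; nra.
Qed.

Lemma S_step t n : 0 <= t -> S c t n <= S c t n.+1.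
Proof. move=> t0 /=; have := cpos n; have := @S_ge0 t n t0; nra. Qed.

Lemma S_mono t m n : 0 <= t -> (m <= n)%N -> S c t m <= S c t n.
Proof.
move=> t0; elim: n => [|n IH]; first by rewrite leqn0 => /eqP ->.
rewrite leq_eqVlt => /orP [/eqP -> //|]; rewrite ltnS => /IH h.
exact: le_trans h (@S_step t n t0).
Qed.

Lemma S_lb t n : 0 <= t -> t * c 0 <= S c t n.+1.
Proof.
move=> t0; apply: le_trans (@S_mono t 1 n.+1 t0 isT) => /=.
by rewrite mulr0 add0r.
Qed.

Lemma S_0 n : S c 0 n = 0.
Proof. by elim: n => //= n ->; rewrite mulr0 mul0r addr0. Qed.

Lemma S_cont n : continuous (fun t => S c t n).
Proof.
elim: n => [|n IH] /= x; first exact: cst_continuous.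
apply: (@continuousD R R R (fun t => (1+t) * S c t n) (fun t => t * c n) x).
  apply: (@continuousM R R (fun t => 1 + t) (fun t => S c t n)); last exact: IH.
  apply: (@continuousD R R R (fun t => 1) (fun t => t)); [exact: cst_continuous | exact: cvg_id].
apply: (@continuousM R R (fun t => t) (fun t => c n)); [exact: cvg_id | exact: cst_continuous].
Qed.

End L.

Theorem lemma5 (R : realType) (K : nat) (P : R) (H : 'I_K -> R) :
  (2 <= K)%N -> 0 < P ->
  (forall i j : 'I_K, (i <= j)%N -> H j <= H i) ->
  (forall k, 0 < H k) ->
  exists (astar : 'I_K -> R) (rmax : R),
    feasible astar /\
    is_min_rate P H astar rmax /\
    (forall b : 'I_K -> R, feasible b ->
       forall m, is_min_rate P H b m -> m <= rmax) /\
    (forall k, rate P H astar k = rmax).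
Proof.
move: K P H; case=> [|[|K]] // P H _ P0 _ Hpos.
pose c : nat -> R := fun n => 1 / (P * H (inord n)).
have cpos : forall n, 0 < c n by move=> n; rewrite /c divr_gt0 // mulr_gt0.
have c0 : 0 <= 1 / c 0 by rewrite divr_ge0 // ltW.
have [t t01 ft] : exists2 t, t \in `[0, 1 / c 0] & S c t K.+2 = 1.
  have f1 : 1 <= S c (1 / c 0) K.+2.
    apply: le_trans (@S_lb R c cpos (1 / c 0) K.+1 c0).
    by rewrite mul1r mulVf // gt_eqF.
  apply: IVT => //.
    by apply: continuous_subspaceT; exact: S_cont.
  rewrite S_0 min_l ?max_r; [by rewrite ler01 | |]; exact: le_trans ler01 f1.
have t0 : 0 <= t by move: t01; rewrite in_itv /= => /andP [].
have gen : forall m, \sum_(i < m) t * (S c t i + c i) = S c t m.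
  elim=> [|m IH]; first by rewrite big_ord0.
  by rewrite big_ord_recr /= IH; ring.
have ck : forall k : 'I_K.+2, c k = 1 / (P * H k) by move=> k; rewrite /c inord_val.
have sumS : forall k : 'I_K.+2,
   \sum_(i < K.+2 | (i < k)%N) t * (S c t i + c i) = S c t k.
  by move=> k; rewrite -(big_ord_widen K.+2 (fun i => t * (S c t i + c i)) (ltnW (ltn_ord k))) gen.
have Dpos : forall k : 'I_K.+2, S c t k + c k != 0.
  by move=> k; rewrite gt_eqF // ltr_wpDl // S_ge0.
have rate_eq : forall k, rate P H (fun k : 'I_K.+2 => t * (S c t k + c k)) k = log2 (1 + t).
  by move=> k; rewrite /rate sumS -ck mulfK ?Dpos.
exists (fun k : 'I_K.+2 => t * (S c t k + c k)), (log2 (1 + t)).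
split; [split|split; [split|split]].
- move=> k; apply/andP; split.
    by rewrite mulr_ge0 // addr_ge0 // ?S_ge0 // ltW.
  rewrite -ft; apply: le_trans (@S_mono R c cpos t k.+1 K.+2 t0 (ltn_ord k)) => /=.
  have := @S_ge0 R c cpos t k t0; nra.
- by rewrite (gen K.+2).
- by exists ord0; rewrite rate_eq.
- by move=> k; rewrite rate_eq.
- move=> b [b01 bsum] m [_ mle]; rewrite leNgt; apply/negP => hlt.
  have hx : forall k : 'I_K.+2,
      t * (\sum_(i < K.+2 | (i < k)%N) b i + 1 / (P * H k)) < b k.
    move=> k; have := lt_le_trans hlt (mle k); rewrite /rate /log2.
    have Dp : 0 < \sum_(i < K.+2 | (i < k)%N) b i + 1 / (P * H k).
      rewrite ltr_wpDl ?divr_gt0 ?mulr_gt0 //.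
      by apply: sumr_ge0 => i _; case/andP: (b01 i).
    have l2 : 0 < (ln 2 : R)^-1 by rewrite invr_gt0 ln_gt0 // ltr1n.
    rewrite ltr_pM2r // ltr_ln ?posrE; first last.
    + have bk0 : 0 <= b k by case/andP: (b01 k).
      have := divr_ge0 bk0 (ltW Dp); lra.
      lra.
    + by rewrite ltrD2l ltr_pdivlMr // mulrC.
  have hw : forall j, (j <= K.+2)%N ->
      \sum_(i < K.+2 | (i < j)%N) b i = \sum_(i < j) b (inord i).
    move=> j hj; rewrite (big_ord_widen K.+2 (fun i => b (inord i)) hj).
    by apply: eq_bigr => i _; rewrite inord_val.
  have ind : forall j, (j <= K.+2)%N -> S c t j <= \sum_(i < j) b (inord i) /\
      ((0 < j)%N -> S c t j < \sum_(i < j) b (inord i)).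
    elim=> [|j IH] hj; first by rewrite big_ord0.
    have [IH1 _] := IH (ltnW hj).
    have h2 : S c t j.+1 < \sum_(i < j.+1) b (inord i).
      rewrite big_ord_recr /=.
      have hb := hx (inord j); rewrite inordK // hw ?(ltnW hj) // in hb.
      rewrite -/(c j) in hb.
      have := ler_wpM2l t0 IH1; nra.
    by split => [|_] //; apply: ltW.
  have := (ind K.+2 (leqnn _)).2 isT.
  rewrite ft (_ : \sum_(i < K.+2) b (inord i) = 1) ?ltxx //.
  by rewrite -bsum; apply: eq_bigr => i _; rewrite inord_val.
- by move=> k; rewrite rate_eq.
Qed.
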